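(* Let $\Gamma^{(1)}$ and $\Gamma^{(2)}$ be finite undirected simple graphs. Then the group $G_{\Gamma^{(1)}\ast\Gamma^{(2)}}$ associated to their simplicial join is isomorphic to the direct product $G_{\Gamma^{(1)}}\times G_{\Gamma^{(2)}}$. More generally, for finite undirected simple graphs $\Gamma^{(1)},\dots,\Gamma^{(k)}$, $G_{\ast_{i=1}^k\Gamma^{(i)}}\cong\prod_{i=1}^k G_{\Gamma^{(i)}}$.
   Context: For a finite undirected simple graph $\Gamma$ with vertex set $\{x_1,\dots,x_n\}$ and edge set $E$, the group $G_\Gamma$ is defined by the presentation with generators $x_1,\dots,x_n$ and $y_{i,j}$ for each pair $i<j$ with $x_ix_j\notin E$, and relations $[x_j,x_i]=1$ if $x_ix_j\in E$; $[x_j,x_i]=y_{i,j}$ if $x_ix_j\notin E$ and $i<j$; and $[x_l,y_{i,j}]=1$ for all $l$ and all such $y_{i,j}$. The simplicial join $\ast_{i=1}^k\Gamma_i$ of graphs $\Gamma_i(V_i,E_i)$ is the graph with vertex set $\bigsqcup_i V_i$ and edge set $\bigsqcup_i E_i\cup\{vw: v\in V_i, w\in V_j, i<j\}$. *)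

(* Defs.v *)
From mathcomp Require Import all_boot.
Set Implicit Arguments. Unset Strict Implicit. Unset Printing Implicit Defensive.

Record sgroup := SGroup {
  sg_car : Type;
  sg_eqv : sg_car -> sg_car -> Prop;
  sg_mul : sg_car -> sg_car -> sg_car }.

Definition sg_iso (G H : sgroup) : Prop :=
  exists f : sg_car G -> sg_car H,
    [/\ (forall u v, sg_eqv u v -> sg_eqv (f u) (f v)),
        (forall u v, sg_eqv (f (sg_mul u v)) (sg_mul (f u) (f v))),
        (forall u v, sg_eqv (f u) (f v) -> sg_eqv u v)
      & (forall w, exists u, sg_eqv (f u) w)].

Definition sg_prod2 (G H : sgroup) : sgroup :=
  @SGroup (sg_car G * sg_car H)
    (fun a b => sg_eqv a.1 b.1 /\ sg_eqv a.2 b.2)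
    (fun a b => (sg_mul a.1 b.1, sg_mul a.2 b.2)).

Definition sg_prod (k : nat) (G : 'I_k -> sgroup) : sgroup :=
  @SGroup (forall i, sg_car (G i))
    (fun a b => forall i, sg_eqv (a i) (b i))
    (fun a b => fun i => sg_mul (a i) (b i)).

(* A letter (b, g) stands for g if b = false and g^-1 if b = true. *)
Definition word (gen : Type) := seq (bool * gen).

Inductive pres_eqv (gen : Type) (R : word gen -> Prop) : word gen -> word gen -> Prop :=
| pe_refl u : pres_eqv R u u
| pe_sym u v : pres_eqv R u v -> pres_eqv R v u
| pe_trans u v w : pres_eqv R u v -> pres_eqv R v w -> pres_eqv R u w
| pe_cancel u v b g : pres_eqv R (u ++ (b, g) :: (~~ b, g) :: v) (u ++ v)
| pe_rel u v r : R r -> pres_eqv R (u ++ r ++ v) (u ++ v).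

Definition presented (gen : Type) (R : word gen -> Prop) : sgroup :=
  @SGroup (word gen) (pres_eqv R) (fun u v => u ++ v).

Definition linv (gen : Type) (a : bool * gen) : bool * gen := (~~ a.1, a.2).
Definition commw (gen : Type) (a b : bool * gen) : word gen :=
  [:: linv a; linv b; a; b].

(* A graph on a vertex type T is given by an edge relation e, and the vertex
   ordering x_1 < ... < x_n by a relation lt.  Generators: x_v for each vertex v,
   and y_{i,j} for each pair i < j with x_i x_j not an edge. *)
Inductive ggen (T : Type) (e lt : rel T) : Type :=
| GX of T
| GY (i j : T) of (lt i j && ~~ e i j).

Inductive G_rel (T : Type) (e lt : rel T) : word (ggen e lt) -> Prop :=
| Gr_edge i j : lt i j -> e i j ->
    G_rel (commw (false, GX e lt j) (false, GX e lt i))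
| Gr_y i j (h : lt i j && ~~ e i j) :
    G_rel (commw (false, GX e lt j) (false, GX e lt i) ++ [:: (true, GY h)])
| Gr_central l i j (h : lt i j && ~~ e i j) :
    G_rel (commw (false, GX e lt l) (false, GY h)).

Definition G_graph (T : Type) (e lt : rel T) : sgroup := presented (@G_rel T e lt).

Definition G_of (n : nat) (e : rel 'I_n) : sgroup := G_graph e (fun i j => i < j).

Definition simple_graph (T : Type) (e : rel T) : Prop :=
  (forall u v, e u v = e v u) /\ (forall u, ~~ e u u).

Definition join2_rel (n1 n2 : nat) (e1 : rel 'I_n1) (e2 : rel 'I_n2) :
    rel ('I_n1 + 'I_n2) :=
  fun u v => match u, v with
  | inl a, inl b => e1 a b
  | inr a, inr b => e2 a b
  | _, _ => true end.

Definition join2_lt (n1 n2 : nat) : rel ('I_n1 + 'I_n2) :=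
  fun u v => match u, v with
  | inl a, inl b => a < b
  | inr a, inr b => a < b
  | inl _, inr _ => true
  | inr _, inl _ => false end.

Definition joinV (k : nat) (n : 'I_k -> nat) := {i : 'I_k & 'I_(n i)}.

Definition join_rel (k : nat) (n : 'I_k -> nat) (e : forall i, rel 'I_(n i)) :
    rel (joinV n) :=
  fun u v => if tag u == tag v then e (tag u) (tagged u) (tagged_as u v) else true.

Definition join_lt (k : nat) (n : 'I_k -> nat) : rel (joinV n) :=
  fun u v => (tag u < tag v) ||
             ((tag u == tag v) && (tagged u < tagged_as u v)).

(* Main.v *)
Require Import Defs.
From mathcomp Require Import all_boot.
Set Implicit Arguments. Unset Strict Implicit. Unset Printing Implicit Defensive.

Section Pres.
Variables (gen : Type) (R : word gen -> Prop).
Local Notation E := (pres_eqv R).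

Lemma E_catl u v w : E u v -> E (w ++ u) (w ++ v).
Proof.
elim=> {u v}.
- move=> u; exact: pe_refl.
- move=> u v _ H; exact: pe_sym.
- move=> u v x _ H1 _ H2; exact: pe_trans H1 H2.
- move=> u v b g; have := pe_cancel R (w ++ u) v b g; by rewrite -!catA.
- move=> u v r Hr; have := pe_rel (w ++ u) v Hr; by rewrite -!catA.
Qed.

Lemma E_catr u v w : E u v -> E (u ++ w) (v ++ w).
Proof.
elim=> {u v}.
- move=> u; exact: pe_refl.
- move=> u v _ H; exact: pe_sym.
- move=> u v x _ H1 _ H2; exact: pe_trans H1 H2.
- move=> u v b g; rewrite -!catA /=; exact: pe_cancel.
- move=> u v r Hr; rewrite -!catA; exact: pe_rel.
Qed.

Lemma E_cat u u' v v' : E u u' -> E v v' -> E (u ++ v) (u' ++ v').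
Proof. move=> H1 H2; apply: pe_trans (E_catr v H1) (E_catl u' H2). Qed.

Lemma E_rel r : R r -> E r [::].
Proof. move=> Hr; have := pe_rel [::] [::] Hr; by rewrite /= cats0. Qed.

Lemma linvK : involutive (@linv gen).
Proof. by case=> b g; rewrite /linv /= negbK. Qed.

Lemma E_cancel a : E [:: a; linv a] [::].
Proof. case: a => b g; exact: (pe_cancel R [::] [::] b g). Qed.

Lemma E_cancel' a : E [:: linv a; a] [::].
Proof. have := E_cancel (linv a); by rewrite linvK. Qed.

Definition inv (w : word gen) := rev (map (@linv gen) w).

Lemma inv_cat u v : inv (u ++ v) = inv v ++ inv u.
Proof. by rewrite /inv map_cat rev_cat. Qed.

Lemma inv0 : inv [::] = [::]. Proof. by []. Qed.
Lemma inv1 a : inv [:: a] = [:: linv a]. Proof. by []. Qed.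

Lemma invK : involutive inv.
Proof.
move=> w; rewrite /inv map_rev revK -map_comp.
by elim: w => //= a w ->; rewrite linvK.
Qed.

Lemma cat_inv w : E (w ++ inv w) [::].
Proof.
elim: w => [|a w IH]; first exact: pe_refl.
rewrite -cat1s inv_cat inv1 -catA (catA w (inv w)).
apply: pe_trans (E_catl [:: a] (E_catr [:: linv a] IH)) _.
exact: E_cancel.
Qed.

Lemma inv_cat' w : E (inv w ++ w) [::].
Proof. have := cat_inv (inv w); by rewrite invK. Qed.

Lemma E_inv u v : E u v -> E (inv u) (inv v).
Proof.
move=> H.
apply: pe_trans (_ : E _ ((inv u ++ v) ++ inv v)) _.
  apply: pe_sym; rewrite -catA.
  have := E_catl (inv u) (cat_inv v); by rewrite cats0.
apply: pe_trans (_ : E _ ((inv u ++ u) ++ inv v)) _.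
  apply: E_catr; apply: E_catl; exact: pe_sym.
have := E_catr (inv v) (inv_cat' u); by [].
Qed.

Lemma E_solve w a : E (w ++ [:: linv a]) [::] -> E w [:: a].
Proof.
move=> H.
apply: pe_trans (_ : E _ ((w ++ [:: linv a]) ++ [:: a])) _.
  rewrite -catA /=; apply: pe_sym.
  have := E_catl w (E_cancel' a); by rewrite cats0.
exact: (E_catr [:: a] H).
Qed.

Definition comm a c := E [:: a; c] [:: c; a].

Lemma comm_of_commw a c : E (commw a c) [::] -> comm c a.
Proof.
case: a => b1 g1; case: c => b2 g2 H.
have H1 := E_catl [:: (b2, g2); (b1, g1)] H.
rewrite cats0 in H1; apply: pe_trans (pe_sym H1) _.
rewrite /commw /linv /=.
apply: pe_trans (pe_cancel R [:: (b2,g2)] [:: (~~ b2, g2); (b1,g1); (b2,g2)] b1 g1) _.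
exact: (pe_cancel R [::] [:: (b1,g1); (b2,g2)] b2 g2).
Qed.

Lemma comm_sym a c : comm a c -> comm c a.
Proof. move=> H; exact: pe_sym. Qed.

Lemma comm_inv_l a c : comm a c -> comm (linv a) c.
Proof.
move=> H; rewrite /comm.
apply: pe_trans (_ : E _ ([:: linv a; c] ++ [:: a; linv a])) _.
  apply: pe_sym; have := E_catl [:: linv a; c] (E_cancel a); by rewrite cats0.
apply: pe_trans (_ : E _ ([:: linv a] ++ [:: a; c] ++ [:: linv a])) _.
  exact: (E_catl [:: linv a] (E_catr [:: linv a] (pe_sym H))).
exact: (E_catr [:: c; linv a] (E_cancel' a)).
Qed.

Lemma comm_signs g1 g2 : comm (false, g1) (false, g2) -> forall b1 b2, comm (b1, g1) (b2, g2).
Proof.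
move=> H b1 b2.
have H1 : comm (b1, g1) (false, g2).
  case: b1; last exact: H.
  exact: (comm_inv_l (a := (false, g1)) H).
apply: comm_sym; case: b2; last exact: comm_sym H1.
exact: (comm_inv_l (a := (false, g2)) (comm_sym H1)).
Qed.

Lemma comm_word a (P : pred (bool * gen)) w :
  (forall c, P c -> comm a c) -> all P w -> E (a :: w) (w ++ [:: a]).
Proof.
move=> HP; elim: w => [|c w IH] /=; first by move=> _; exact: pe_refl.
case/andP=> Pc Pw.
exact: (pe_trans (E_catr w (HP c Pc)) (E_catl [:: c] (IH Pw))).
Qed.

End Pres.

Section Hom.
Variables (gen gen' : Type) (R : word gen -> Prop) (R' : word gen' -> Prop).

Definition ext (phi : gen -> word gen') (a : bool * gen) :=
  if a.1 then inv (phi a.2) else phi a.2.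

Definition hom (T U : Type) (f : T -> seq U) (w : seq T) := flatten (map f w).

Lemma hom_cat (T U : Type) (f : T -> seq U) u v : hom f (u ++ v) = hom f u ++ hom f v.
Proof. by rewrite /hom map_cat flatten_cat. Qed.

Lemma hom1 (T U : Type) (f : T -> seq U) a : hom f [:: a] = f a.
Proof. by rewrite /hom /= cats0. Qed.

Lemma hom_ext_inv phi w : hom (ext phi) (inv w) = inv (hom (ext phi) w).
Proof.
elim: w => [|a w IH] //.
rewrite -cat1s inv_cat hom_cat IH hom_cat inv_cat inv1 /hom /= !cats0.
by case: a => [[] g]; rewrite /ext /= ?invK.
Qed.

Lemma hom_resp phi :
  (forall r, R r -> pres_eqv R' (hom (ext phi) r) [::]) ->
  forall u v, pres_eqv R u v -> pres_eqv R' (hom (ext phi) u) (hom (ext phi) v).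
Proof.
move=> HR u v; elim=> {u v}.
- move=> u; exact: pe_refl.
- move=> u v _ H; exact: pe_sym.
- move=> u v x _ H1 _ H2; exact: pe_trans H1 H2.
- move=> u v b g; rewrite !hom_cat; apply: E_catl.
  rewrite /hom /= catA.
  have H : pres_eqv R' (ext phi (b, g) ++ ext phi (~~ b, g)) [::].
    case: b; rewrite /ext /=; [exact: inv_cat' | exact: cat_inv].
  exact: (E_catr _ H).
- move=> u v r Hr; rewrite !hom_cat; apply: E_catl.
  exact: (E_catr _ (HR r Hr)).
Qed.

Lemma hom_comp (T U W : Type) (f : T -> seq U) (g : U -> seq W) w :
  hom g (hom f w) = hom (fun a => hom g (f a)) w.
Proof.
elim: w => [|a w IH] //.
rewrite -cat1s !hom_cat IH; congr (_ ++ _).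
Qed.

Lemma hom_id_E (f : bool * gen -> word gen) w :
  (forall a, pres_eqv R (f a) [:: a]) -> pres_eqv R (hom f w) w.
Proof.
move=> H; elim: w => [|a w IH]; first exact: pe_refl.
exact: (E_cat (H a) IH).
Qed.
End Hom.
Section Generic.
Local Unset Implicit Arguments.
Variables (V : Type) (e lt : rel V) (J : eqType) (tag : V -> J) (C : J -> Type)
  (ej ltj : forall j, rel (C j)) (inj : forall j, C j -> V)
  (proj : forall j, V -> option (C j)) (s : seq J).
Hypothesis projK : forall j u a, proj j u = Some a -> inj j a = u.
Hypothesis injK : forall j a, proj j (inj j a) = Some a.
Hypothesis proj_none : forall j u, tag u != j -> proj j u = None.
Hypothesis proj_some : forall u, exists a, proj (tag u) u = Some a.
Hypothesis tag_inj : forall j a, tag (inj j a) = j.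
Hypothesis e_inj : forall j a b, e (inj j a) (inj j b) = ej j a b.
Hypothesis lt_inj : forall j a b, lt (inj j a) (inj j b) = ltj j a b.
Hypothesis e_tag : forall u v, tag u != tag v -> e u v.
Hypothesis lt_tag : forall u v, tag u != tag v -> lt u v || lt v u.
Hypothesis s_uniq : uniq s.
Hypothesis s_all : forall j, j \in s.

Local Notation SG := (ggen e lt).
Local Notation TG j := (ggen (ej j) (ltj j)).
Local Notation ES := (pres_eqv (@G_rel V e lt)).
Local Notation ET j := (pres_eqv (@G_rel (C j) (ej j) (ltj j))).

Definition phix j (u : V) : word (TG j) :=
  if proj j u is Some a then [:: (false, GX (ej j) (ltj j) a)] else [::].

Definition phi0 j (g : SG) : word (TG j) :=
  match g with
  | GX u => phix j u
  | GY u v _ => inv (phix j v) ++ inv (phix j u) ++ phix j v ++ phix j u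
  end.

Definition psi0 j (g : TG j) : word SG :=
  match g with
  | GX a => [:: (false, GX e lt (inj j a))]
  | GY a b _ => commw (false, GX e lt (inj j b)) (false, GX e lt (inj j a))
  end.

Definition fmap (w : word SG) : forall j, word (TG j) := fun j => hom (ext (phi0 j)) w.
Definition gmap (t : forall j, word (TG j)) : word SG :=
  flatten [seq hom (ext (psi0 j)) (t j) | j <- s].

Lemma tag_eq_of_rel u v : lt u v && ~~ e u v -> tag u = tag v.
Proof.
case/andP=> _ He; apply/eqP; apply: contraNT He; exact: e_tag.
Qed.

Lemma proj_tag j u a : proj j u = Some a -> tag u = j.
Proof. by move/projK <-; rewrite tag_inj. Qed.

Lemma proj_some' j u : tag u = j -> exists a, proj j u = Some a.
Proof. move=> <-; exact: proj_some. Qed.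

Lemma proj_none' j u : proj j u = None -> tag u != j.
Proof. apply: contraPN => /eqP /proj_some' [a ->]; done. Qed.

Lemma phi_GY j u v (h : lt u v && ~~ e u v) :
  phi0 j (GY h) = [::] \/ exists (a b : C j) (h' : ltj j a b && ~~ ej j a b), ET j (phi0 j (GY h)) [:: (false, GY h')].
Proof.
have tuv := tag_eq_of_rel _ _ h.
case Pu: (proj j u) => [a|]; last first.
  have Pv : proj j v = None.
    by apply: proj_none; rewrite -tuv; exact: proj_none'.
  by left; rewrite /= /phix Pu Pv.
have [b Pv] : exists b, proj j v = Some b.
  by apply: proj_some'; rewrite -tuv; exact: (proj_tag _ _ _ Pu).
right.
have h' : ltj j a b && ~~ ej j a b.
  by rewrite -lt_inj -e_inj (projK _ _ _ Pu) (projK _ _ _ Pv).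
exists a, b, h'; rewrite /= /phix Pu Pv.
apply: E_solve; exact: (E_rel (Gr_y h')).
Qed.

Lemma phi_rel j r : G_rel r -> ET j (hom (ext (phi0 j)) r) [::].
Proof.
case=> {r}.
- move=> u v Hlt He; rewrite /hom /= /ext /= !cats0.
  case Pu: (proj j u) => [a|]; last first.
    rewrite /phix Pu inv0 /= cats0. exact: (@inv_cat' _ _ (phix j v)).
  case Pv: (proj j v) => [b|]; last first.
    rewrite /phix Pv Pu inv0 !cat0s; exact: inv_cat'.
  rewrite /phix Pu Pv !inv1 /=.
  apply: E_rel; apply: Gr_edge.
  + by rewrite -lt_inj (projK _ _ _ Pu) (projK _ _ _ Pv).
  + by rewrite -e_inj (projK _ _ _ Pu) (projK _ _ _ Pv).
- move=> u v h; rewrite hom_cat /hom /= /ext /= !cats0; exact: cat_inv.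
- move=> l u v h.
  have -> : hom (ext (phi0 j)) (commw (false, GX e lt l) (false, GY h)) =
     inv (phix j l) ++ inv (phi0 j (GY h)) ++ phix j l ++ phi0 j (GY h).
    by rewrite /hom /= !cats0.
  case: (phi_GY j _ _ h) => [->|[a [b [h' H]]]].
    rewrite inv0 cat0s cats0; exact: inv_cat'.
  rewrite /phix; case Pl: (proj j l) => [c|]; last first.
    rewrite inv0 !cat0s; exact: inv_cat'.
  have H2 : ET j (inv (phi0 j (GY h))) [:: (true, GY h')] by exact: (E_inv H).
  apply: (pe_trans _ (E_rel (Gr_central c h'))).
  exact: (E_catl _ (E_cat H2 (E_catl _ H))).
Qed.


Lemma psi_GY j a b (h : ltj j a b && ~~ ej j a b) :
  exists h' : lt (inj j a) (inj j b) && ~~ e (inj j a) (inj j b),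
  ES (psi0 j (GY h)) [:: (false, GY h')].
Proof.
have h' : lt (inj j a) (inj j b) && ~~ e (inj j a) (inj j b) by rewrite lt_inj e_inj.
exists h'; apply: E_solve; exact: (E_rel (Gr_y h')).
Qed.

Lemma psi_rel j r : @G_rel (C j) (ej j) (ltj j) r -> ES (hom (ext (psi0 j)) r) [::].
Proof.
case=> {r}.
- move=> a b Hlt He.
  have H1 : lt (inj j a) (inj j b) by rewrite lt_inj.
  have H2 : e (inj j a) (inj j b) by rewrite e_inj.
  exact: (E_rel (Gr_edge H1 H2)).
- move=> u v h; rewrite hom_cat; exact: (cat_inv _ (psi0 j (GY h))).
- move=> l a b h.
  have -> : hom (ext (psi0 j)) (commw (false, GX (ej j) (ltj j) l) (false, GY h)) =
     inv [:: (false, GX e lt (inj j l))] ++ inv (psi0 j (GY h)) ++ [:: (false, GX e lt (inj j l))] ++ psi0 j (GY h).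
    by rewrite /hom /= ?cats0.
  case: (psi_GY j _ _ h) => h' H.
  have H2 : ES (inv (psi0 j (GY h))) [:: (true, GY h')] by exact: (E_inv H).
  apply: (pe_trans _ (E_rel (Gr_central (inj j l) h'))).
  exact: (E_catl _ (E_cat H2 (E_catl _ H))).
Qed.

Definition rho j (a : bool * SG) : word SG := hom (ext (psi0 j)) (ext (phi0 j) a).
Definition home (a : bool * SG) : J :=
  match a.2 with GX u => tag u | GY u _ _ => tag u end.
Definition isX j (c : bool * SG) : bool := if c.2 is GX u then tag u == j else false.

Lemma rho_inv j g : rho j (true, g) = inv (rho j (false, g)).
Proof. by rewrite /rho /ext /= hom_ext_inv. Qed.

Lemma K1 j a : j != home a -> rho j a = [::].
Proof.
case: a => b g.
suff H : j != home (false, g) -> rho j (false, g) = [::].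
  by case: b => // Hj; rewrite rho_inv H.
case: g => [u | u v h] /= Hj.
- rewrite /rho /ext /= /phix proj_none //; by rewrite eq_sym.
- have tuv := tag_eq_of_rel _ _ h.
  have Hu : tag u != j by rewrite eq_sym.
  have Hv : tag v != j by rewrite -tuv.
  by rewrite /rho /ext /= /phix (proj_none _ _ Hu) (proj_none _ _ Hv).
Qed.

Lemma K2 a : ES (rho (home a) a) [:: a].
Proof.
case: a => b g.
suff H : ES (rho (home (false, g)) (false, g)) [:: (false, g)].
  by case: b => //; rewrite rho_inv; exact: (E_inv H).
case: g => [u | u v h] /=.
- have [a Pa] := proj_some u.
  by rewrite /rho /ext /= /phix Pa /hom /= (projK _ _ _ Pa); exact: pe_refl.
- have tuv := tag_eq_of_rel _ _ h.
  have [a Pa] := proj_some u.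
  have [c Pb] := proj_some' (tag u) v (esym tuv).
  rewrite /rho /ext /= /phix Pa Pb /hom /= (projK _ _ _ Pa) (projK _ _ _ Pb).
  apply: E_solve; exact: (E_rel (Gr_y h)).
Qed.

Lemma all_inv j w : all (isX j) (inv w) = all (isX j) w.
Proof. by rewrite /inv all_rev all_map; apply: eq_all => -[b g]. Qed.

Lemma all_hom (T U : Type) (P : pred U) (f : T -> seq U) w :
  (forall a, all P (f a)) -> all P (hom f w).
Proof. move=> H; elim: w => [|a w IH] //; by rewrite /hom /= all_cat H. Qed.

Lemma K3 j a : all (isX j) (rho j a).
Proof.
case: a => b g.
suff H : all (isX j) (rho j (false, g)).
  by case: b => //; rewrite rho_inv all_inv.
case: g => [u | u v h] /=.
- rewrite /rho /ext /= /phix; case Pa: (proj j u) => [a|] //=.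
  by rewrite /isX /= tag_inj eqxx.
- rewrite /rho /ext /= /phix.
  case: (proj j u) => [a|]; case: (proj j v) => [c|] //=;
    by rewrite /isX /= ?tag_inj ?eqxx.
Qed.

Lemma K4 j a c : j != home a -> isX j c -> comm (@G_rel V e lt) a c.
Proof.
case: a => b g; case: c => b' g'; rewrite /isX /=.
case: g' => // l Hj /eqP Hl; apply: comm_signs; move: Hj.
case: g => [u | u v h] /= Hj.
- have Hne : tag u != tag l by rewrite Hl eq_sym.
  case/orP: (lt_tag _ _ Hne) => Hlt.
  + have He : e u l by apply: e_tag.
    exact: (comm_of_commw (E_rel (Gr_edge Hlt He))).
  + have He : e l u by apply: e_tag; rewrite eq_sym.
    exact: (comm_sym (comm_of_commw (E_rel (Gr_edge Hlt He)))).
- exact: (comm_of_commw (E_rel (Gr_central l h))).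
Qed.


Lemma step a (W : J -> word SG) (s' : seq J) :
  uniq s' -> (forall j, all (isX j) (W j)) ->
  ES (flatten [seq rho j a ++ W j | j <- s'])
     (if home a \in s' then a :: flatten [seq W j | j <- s'] else flatten [seq W j | j <- s']).
Proof.
move=> + HW; elim: s' => [|j s' IH] /=; first by move=> _; exact: pe_refl.
case/andP=> Hjs Hu; rewrite in_cons.
have IH' := IH Hu.
case: (eqVneq (home a) j) => [Ej | Nj] /=.
- have Hn : home a \notin s' by rewrite Ej.
  rewrite (negbTE Hn) in IH'.
  rewrite -catA -[a :: _]cat1s; apply: E_cat; first by rewrite -Ej; exact: K2.
  exact: E_catl.
- have Hr : rho j a = [::].
    by apply: K1; apply/negP => /eqP E; rewrite E eqxx in Nj.
  rewrite Hr cat0s.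
  case: ifP IH' => Hin IH'.
  + apply: pe_trans (E_catl (W j) IH') _.
    rewrite -[a :: flatten _]cat1s catA -[a :: _ ++ _]cat1s catA.
    apply: E_catr; apply: pe_sym.
    apply: (comm_word (P := isX j)) => //.
    move=> c Hc; apply: K4 Hc; apply/negP => /eqP E; by rewrite E eqxx in Nj.
  + exact: E_catl.
Qed.

Lemma flatten_nil (T U : Type) (s' : seq T) : flatten [seq [::] : seq U | _ <- s'] = [::].
Proof. by elim: s'. Qed.

Lemma reorder (s' : seq J) : uniq s' -> (forall j, j \in s') ->
  forall w, ES (flatten [seq hom (rho j) w | j <- s']) w.
Proof.
move=> Hu Hall; elim=> [|a w IH].
  rewrite /hom /= flatten_nil; exact: pe_refl.
have H := step a (fun j => hom (rho j) w) s' Hu (fun j => all_hom _ _ _ _ w (K3 j)).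
rewrite Hall in H.
apply: pe_trans H _; exact: (E_catl [:: a] IH).
Qed.

Lemma gf w : ES (gmap (fmap w)) w.
Proof.
rewrite /gmap /fmap.
have -> : [seq hom (ext (psi0 j)) (hom (ext (phi0 j)) w) | j <- s] = [seq hom (rho j) w | j <- s].
  by apply: eq_map => j; rewrite hom_comp.
exact: reorder.
Qed.

Lemma gresp_gen (s' : seq J) (t t' : forall j, word (TG j)) :
  (forall j, ET j (t j) (t' j)) ->
  ES (flatten [seq hom (ext (psi0 j)) (t j) | j <- s'])
     (flatten [seq hom (ext (psi0 j)) (t' j) | j <- s']).
Proof.
move=> H; elim: s' => [|j s' IH] /=; first exact: pe_refl.
apply: E_cat => //; apply: hom_resp => //; exact: psi_rel.
Qed.

Lemma gresp t t' : (forall j, ET j (t j) (t' j)) -> ES (gmap t) (gmap t').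
Proof. exact: gresp_gen. Qed.

Lemma fresp u v : ES u v -> forall j, ET j (fmap u j) (fmap v j).
Proof. move=> H j; exact: (@hom_resp _ _ _ _ (phi0 j) (phi_rel j) u v H). Qed.

Lemma fmul u v j : fmap (u ++ v) j = fmap u j ++ fmap v j.
Proof. exact: hom_cat. Qed.

Definition sigma i j (a : bool * TG j) : word (TG i) := hom (ext (phi0 i)) (ext (psi0 j) a).

Lemma sigma_inv i j g : sigma i j (true, g) = inv (sigma i j (false, g)).
Proof. by rewrite /sigma /ext /= hom_ext_inv. Qed.

Lemma S1 i j a : j != i -> sigma i j a = [::].
Proof.
move=> Hj; case: a => b g.
suff H : sigma i j (false, g) = [::] by case: b => //; rewrite sigma_inv H.
have Hn : forall x, proj i (inj j x) = None by move=> x; apply: proj_none; rewrite tag_inj.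
case: g => [x | x y h]; rewrite /sigma /ext /= /hom /= /phix ?Hn //.
Qed.

Lemma S2 i a : ET i (sigma i i a) [:: a].
Proof.
case: a => b g.
suff H : ET i (sigma i i (false, g)) [:: (false, g)].
  by case: b => //; rewrite sigma_inv; exact: (E_inv H).
case: g => [x | x y h]; rewrite /sigma /ext /= /hom /= /phix ?injK /=.
- exact: pe_refl.
- apply: E_solve; exact: (E_rel (Gr_y h)).
Qed.

Lemma flatten_none (T : Type) (X : J -> seq T) i (s' : seq J) :
  i \notin s' -> (forall j, j != i -> X j = [::]) ->
  flatten [seq X j | j <- s'] = [::].
Proof.
move=> + H; elim: s' => [|k s' IH] //=.
rewrite in_cons negb_or => /andP[Hk Hs].
rewrite H ?IH //; apply/negP => /eqP E; by rewrite E eqxx in Hk.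
Qed.

Lemma flatten_single (T : Type) (X : J -> seq T) i (s' : seq J) :
  uniq s' -> i \in s' -> (forall j, j != i -> X j = [::]) ->
  flatten [seq X j | j <- s'] = X i.
Proof.
move=> + + H; elim: s' => [|j s' IH] //=.
case/andP=> Hjs Hu; rewrite in_cons; case: (eqVneq i j) => [Eij _ | Nij] /=.
- rewrite -Eij in Hjs *; by rewrite (flatten_none _ X i s' Hjs H) cats0.
- move=> Hin; rewrite H ?IH //.
  apply/negP => /eqP E; by rewrite E eqxx in Nij.
Qed.

Lemma fg t i : ET i (fmap (gmap t) i) (t i).
Proof.
rewrite /fmap /gmap.
have Hf : forall (L : seq (word SG)), hom (ext (phi0 i)) (flatten L) = flatten [seq hom (ext (phi0 i)) x | x <- L].
  by elim=> [|x L IH] //=; rewrite hom_cat IH.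
rewrite Hf -map_comp.
rewrite (flatten_single _ (fun j => hom (ext (phi0 i)) (hom (ext (psi0 j)) (t j))) i s s_uniq (s_all i)).
- rewrite hom_comp; apply: hom_id_E; exact: S2.
- move=> j Hj; rewrite hom_comp.
  elim: (t j) => [|a w IH] //; rewrite -cat1s hom_cat IH cats0 hom1.
  exact: (S1 i j a Hj).
Qed.

Lemma main_facts :
  [/\ (forall u v, ES u v -> forall j, ET j (fmap u j) (fmap v j)),
      (forall u v j, fmap (u ++ v) j = fmap u j ++ fmap v j),
      (forall t t', (forall j, ET j (t j) (t' j)) -> ES (gmap t) (gmap t')),
      (forall w, ES (gmap (fmap w)) w) &
      (forall t i, ET i (fmap (gmap t) i) (t i))].
Proof.
split.
- exact: fresp.
- exact: fmul.
- exact: gresp.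
- exact: gf.
- exact: fg.
Qed.

End Generic.


Lemma iso_glue (gen : Type) (R : word gen -> Prop) (H : sgroup)
  (f : word gen -> sg_car H) (g : sg_car H -> word gen) :
  (forall u v, pres_eqv R u v -> sg_eqv (f u) (f v)) ->
  (forall u v, sg_eqv (f (u ++ v)) (sg_mul (f u) (f v))) ->
  (forall x y, sg_eqv x y -> pres_eqv R (g x) (g y)) ->
  (forall w, pres_eqv R (g (f w)) w) ->
  (forall x, sg_eqv (f (g x)) x) ->
  sg_iso (presented R) H.
Proof.
move=> Hf Hm Hg Hgf Hfg; exists f; split => //.
- move=> u v Huv; apply: pe_trans (pe_sym (Hgf u)) _.
  exact: (pe_trans (Hg _ _ Huv) (Hgf v)).
- move=> w; exists (g w); exact: Hfg.
Qed.

Section KFold.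
Variables (k : nat) (n : 'I_k -> nat) (e : forall i, rel 'I_(n i)).

Definition kinj (j : 'I_k) (a : 'I_(n j)) : joinV n := Tagged (fun j => 'I_(n j)) a.
Arguments kinj : clear implicits.
Definition kproj (j : 'I_k) (u : joinV n) : option 'I_(n j) :=
  if tag u == j then insub (val (tagged u)) else None.

Lemma kprojK j u a : kproj j u = Some a -> kinj j a = u.
Proof.
case: u => i b; rewrite /kproj /=; case: eqP => // Eij; subst i.
by rewrite valK => -[->].
Qed.

Lemma kinjK j a : kproj j (kinj j a) = Some a.
Proof. by rewrite /kproj /kinj /= eqxx valK. Qed.

Lemma kproj_none j u : tag u != j -> kproj j u = None.
Proof. by move=> H; rewrite /kproj (negbTE H). Qed.

Lemma kproj_some u : exists a, kproj (tag u) u = Some a.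
Proof. case: u => i b; exists b; by rewrite /kproj /= eqxx valK. Qed.

Lemma ktag_inj j a : tag (kinj j a) = j.
Proof. by []. Qed.

Lemma ke_inj j a b : join_rel e (kinj j a) (kinj j b) = @e j a b.
Proof. by rewrite /join_rel /kinj /= eqxx tagged_asE. Qed.

Lemma klt_inj j a b : @join_lt k n (kinj j a) (kinj j b) = (a < b).
Proof. by rewrite /join_lt /kinj /= ltnn eqxx tagged_asE. Qed.

Lemma ke_tag u v : tag u != tag v -> join_rel e u v.
Proof. by move=> H; rewrite /join_rel (negbTE H). Qed.

Lemma klt_tag u v : tag u != tag v -> @join_lt k n u v || @join_lt k n v u.
Proof.
move=> H; have : (tag u : nat) != tag v by [].
rewrite neq_ltn => /orP [H1|H1]; by rewrite /join_lt H1 ?orbT.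
Qed.

Lemma kfold_iso : sg_iso (G_graph (join_rel e) (@join_lt k n)) (sg_prod (fun i => G_of (@e i))).
Proof.
have [F1 F2 F3 F4 F5] := main_facts (joinV n) (join_rel e) (@join_lt k n) 'I_k (fun u : joinV n => tag u) (fun j => 'I_(n j)) e
  (fun j (a b : 'I_(n j)) => a < b) kinj kproj (enum 'I_k) kprojK kinjK kproj_none kproj_some ktag_inj ke_inj klt_inj
  ke_tag klt_tag (enum_uniq 'I_k) (@mem_enum _ _).
refine (@iso_glue _ _ (sg_prod (fun i => G_of (@e i))) (fmap (joinV n) (join_rel e) (@join_lt k n) 'I_k (fun j => 'I_(n j)) e (fun j (a b : 'I_(n j)) => a < b) kproj)
  (gmap (joinV n) (join_rel e) (@join_lt k n) 'I_k (fun j => 'I_(n j)) e (fun j (a b : 'I_(n j)) => a < b) kinj (enum 'I_k)) _ _ _ _ _).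
- move=> u v Huv i; exact: F1.
- move=> u v i; rewrite F2; exact: pe_refl.
- exact: F3.
- exact: F4.
- move=> x i; exact: F5.
Qed.

End KFold.

Section Bin.
Variables (n1 n2 : nat) (e1 : rel 'I_n1) (e2 : rel 'I_n2).
Local Notation V := ('I_n1 + 'I_n2)%type.

Definition BC (b : bool) : Type := if b then 'I_n1 else 'I_n2.
Definition Bej (b : bool) : rel (BC b) := if b as b return rel (BC b) then e1 else e2.
Definition Blt (b : bool) : rel (BC b) :=
  if b as b return rel (BC b) then (fun x y : 'I_n1 => x < y) else (fun x y : 'I_n2 => x < y).
Definition Binj (b : bool) : BC b -> V :=
  if b as b return BC b -> V then @inl _ _ else @inr _ _.
Definition Bproj (b : bool) (u : V) : option (BC b) :=
  if b as b return option (BC b) then (if u is inl a then Some a else None)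
  else (if u is inr a then Some a else None).
Definition Btag (u : V) : bool := if u is inl _ then true else false.

Arguments Bej : clear implicits.
Arguments Blt : clear implicits.
Arguments Binj : clear implicits.
Arguments Bproj : clear implicits.

Lemma BprojK b u a : Bproj b u = Some a -> Binj b a = u.
Proof. by case: b a => a; case: u => x //= [->]. Qed.
Lemma BinjK b a : Bproj b (Binj b a) = Some a.
Proof. by case: b a. Qed.
Lemma Bproj_none b u : Btag u != b -> Bproj b u = None.
Proof. by case: b; case: u. Qed.
Lemma Bproj_some u : exists a, Bproj (Btag u) u = Some a.
Proof. by case: u => x; exists x. Qed.
Lemma Btag_inj b a : Btag (Binj b a) = b.
Proof. by case: b a. Qed.
Lemma Be_inj b a c : join2_rel e1 e2 (Binj b a) (Binj b c) = Bej b a c.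
Proof. by case: b a c. Qed.
Lemma Blt_inj b a c : @join2_lt n1 n2 (Binj b a) (Binj b c) = Blt b a c.
Proof. by case: b a c. Qed.
Lemma Be_tag u v : Btag u != Btag v -> join2_rel e1 e2 u v.
Proof. by case: u; case: v. Qed.
Lemma Blt_tag u v : Btag u != Btag v -> @join2_lt n1 n2 u v || @join2_lt n1 n2 v u.
Proof. by case: u; case: v. Qed.

Lemma bin_iso : sg_iso (G_graph (join2_rel e1 e2) (@join2_lt n1 n2)) (sg_prod2 (G_of e1) (G_of e2)).
Proof.
have [F1 F2 F3 F4 F5] := main_facts V (join2_rel e1 e2) (@join2_lt n1 n2) (bool : eqType) Btag BC Bej Blt
  Binj Bproj [:: true; false] BprojK BinjK Bproj_none Bproj_some Btag_inj Be_inj Blt_inj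
  Be_tag Blt_tag (erefl true) (fun b => match b with true => erefl true | false => erefl true end).
pose f := fmap V (join2_rel e1 e2) (@join2_lt n1 n2) (bool : eqType) BC Bej Blt Bproj.
pose g := gmap V (join2_rel e1 e2) (@join2_lt n1 n2) (bool : eqType) BC Bej Blt Binj [:: true; false].
refine (@iso_glue _ _ (sg_prod2 (G_of e1) (G_of e2)) (fun w => (f w true, f w false))
  (fun p => g (fun b => if b as b return word (ggen (Bej b) (Blt b)) then p.1 else p.2)) _ _ _ _ _).
- move=> u v Huv; split; [exact: (F1 _ _ Huv true) | exact: (F1 _ _ Huv false)].
- move=> u v; split; rewrite /= /f F2; exact: pe_refl.
- move=> x y [H1 H2]; apply: F3; by case.
- move=> w; exact: F4.
- move=> x; split; [exact: (F5 _ true) | exact: (F5 _ false)].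
Qed.

End Bin.

Theorem lemma5p2 :
  (forall (n1 n2 : nat) (e1 : rel 'I_n1) (e2 : rel 'I_n2),
     simple_graph e1 -> simple_graph e2 ->
     sg_iso (G_graph (join2_rel e1 e2) (@join2_lt n1 n2))
            (sg_prod2 (G_of e1) (G_of e2))) /\
  (forall (k : nat) (n : 'I_k -> nat) (e : forall i, rel 'I_(n i)),
     (forall i, simple_graph (e i)) ->
     sg_iso (G_graph (join_rel e) (@join_lt k n))
            (sg_prod (fun i => G_of (e i)))).
Proof.
split.
- move=> n1 n2 e1 e2 _ _; exact: bin_iso.
- move=> k n e _; exact: kfold_iso.
Qed.
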